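(* Let $m\ge 4$ and $n\ge 5$ be integers with $n$ even. On an $m\times n$ board with White king on $(m,1)$, White rook on $(1,1)$, Black king on $(m,n)$, and White to move, White can force checkmate within $n+1$ moves.
   Context: The board is the set of squares $(x,y)$ with $1\le x\le m$ (column) and $1\le y\le n$ (row). The pieces move and capture as in ordinary chess, restricted to this rectangular board: a king moves to any of the up to eight adjacent squares, and a rook moves any number of squares along its row or column without passing through another piece. The usual legality rules apply: a king may not move to a square attacked by an enemy piece, and the kings may never be adjacent. Black is checkmated if the Black king is attacked and Black has no legal move. ''White can force checkmate within $k$ moves'' means White has a strategy such that, against every sequence of legal Black replies, Black is checkmated by one of White's first $k$ moves; the players alternate, White first. *)

(* Defs.v *)
From Stdlib Require Import Arith Lia List.
Import ListNotations.

(* A square (x, y): x = column (1..m), y = row (1..n). *)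
Definition sq : Type := (nat * nat)%type.

Definition on_board (m n : nat) (s : sq) : Prop :=
  1 <= fst s <= m /\ 1 <= snd s <= n.

Definition absdiff (a b : nat) : nat := (a - b) + (b - a).

Definition king_close (s t : sq) : Prop :=
  absdiff (fst s) (fst t) <= 1 /\ absdiff (snd s) (snd t) <= 1.

Definition king_step (s t : sq) : Prop := s <> t /\ king_close s t.

Definition strictly_between (z u v : nat) : Prop := (u < z < v) \/ (v < z < u).

Definition rook_reach (s t : sq) (blockers : list sq) : Prop :=
  (fst s = fst t /\ snd s <> snd t /\
     forall c, In c blockers -> ~ (fst c = fst s /\ strictly_between (snd c) (snd s) (snd t)))
  \/
  (snd s = snd t /\ fst s <> fst t /\
     forall c, In c blockers -> ~ (snd c = snd s /\ strictly_between (fst c) (fst s) (fst t))).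

(* Position: White king, White rook (None once captured), Black king. *)
Record pos : Type := Pos { wk : sq; wr : option sq; bk : sq }.

(* Black has only a king, so White's king
   can never be in check; the only constraints are kings never adjacent, no
   landing on an occupied square, and the rook not jumping over pieces. *)
Inductive wmove (m n : nat) : pos -> pos -> Prop :=
| wmove_king : forall k r b k',
    king_step k k' -> on_board m n k' -> Some k' <> r -> ~ king_close k' b ->
    wmove m n (Pos k r b) (Pos k' r b)
| wmove_rook : forall k r b r',
    rook_reach r r' [k; b] -> on_board m n r' -> r' <> k -> r' <> b ->
    wmove m n (Pos k (Some r) b) (Pos k (Some r') b).

(* A square t is attacked by the White rook (if present) in position p; the
   Black king is not a blocker (it is the piece that moves / is attacked),
   only the White king blocks. *)
Definition rook_attacks (p : pos) (t : sq) : Prop :=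
  exists r, wr p = Some r /\ rook_reach r t [wk p].

Inductive bmove (m n : nat) : pos -> pos -> Prop :=
| bmove_plain : forall k r b b',
    king_step b b' -> on_board m n b' -> ~ king_close b' k ->
    ~ rook_attacks (Pos k r b) b' -> r <> Some b' ->
    bmove m n (Pos k r b) (Pos k r b')
| bmove_capture : forall k b b',
    king_step b b' -> on_board m n b' -> ~ king_close b' k ->
    bmove m n (Pos k (Some b') b) (Pos k None b').

Definition black_in_check (p : pos) : Prop := rook_attacks p (bk p).

Definition checkmated (m n : nat) (p : pos) : Prop :=
  black_in_check p /\ forall q, ~ bmove m n p q.

(* [white_mates_within m n k p]: White, to move in p, has a strategy such that
   against every sequence of legal Black replies Black is checkmated by one of
   White's first k moves (a stalemate counts as failure). *)
Fixpoint white_mates_within (m n k : nat) (p : pos) : Prop :=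
  match k with
  | 0 => False
  | S k' =>
      exists q, wmove m n p q /\
        (checkmated m n q \/
         ((exists r, bmove m n q r) /\
          forall r, bmove m n q r -> white_mates_within m n k' r))
  end.

(* Main.v *)
Require Import Defs.
From Stdlib Require Import Arith.
From Stdlib Require Import Lia List.
Import ListNotations.

Ltac un := unfold king_step, king_close, absdiff, on_board, strictly_between in *; cbn [fst snd] in *.

Ltac blockers_ok :=
  let c := fresh "c" in let Hc := fresh "Hc" in
  intros c Hc; cbn [fst snd In wk wr bk] in Hc;
  repeat (destruct Hc as [Hc|Hc]; [subst c; unfold strictly_between; cbn [fst snd In wk wr bk]; lia|]);
  contradiction.

Ltac reach_tac :=
  unfold rook_reach; cbn [fst snd In wk wr bk];
  first [ left; split; [lia|]; split; [lia|]; blockers_ok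
        | right; split; [lia|]; split; [lia|]; blockers_ok ].

Ltac notatt :=
  let r0 := fresh "r0" in let Hr0 := fresh "Hr0" in let Hre := fresh "Hre" in
  let H1 := fresh "H1" in let H2 := fresh "H2" in let H3 := fresh "H3" in
  intros [r0 [Hr0 Hre]]; cbn [fst snd In wk wr bk] in Hr0; injection Hr0 as <-;
  unfold rook_reach in Hre; cbn [fst snd In wk wr bk] in Hre;
  destruct Hre as [[H1 [H2 H3]]|[H1 [H2 H3]]];
  first [ lia
        | exfalso; apply (H3 _ (or_introl eq_refl)); cbn [fst snd In wk wr bk]; unfold strictly_between; lia ].

Ltac neqpair := let H := fresh in intro H; injection H; lia.

Lemma ks_ne (a b c d : nat) : (a, b) <> (c, d) -> a <> c \/ b <> d.
Proof.
  intros H; destruct (Nat.eq_dec a c); destruct (Nat.eq_dec b d); subst; auto.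
Qed.

Lemma wmw_S m n k p : white_mates_within m n (S k) p <->
  exists q, wmove m n p q /\
        (checkmated m n q \/
         ((exists r, bmove m n q r) /\
          forall r, bmove m n q r -> white_mates_within m n k r)).
Proof. reflexivity. Qed.

Lemma bm_col (m n k y r : nat) q : 2 <= m -> 1 <= r <= 2 -> 4 <= y -> k + 2 <= y -> 1 <= k ->
  bmove m n (Pos (m,k) (Some (m-1,r)) (m,y)) q ->
  exists y', q = Pos (m,k) (Some (m-1,r)) (m,y') /\ (y' = S y \/ S y' = y) /\ k+2 <= y' /\ y' <= n.
Proof.
  intros Hm Hr Hy Hky Hk H.
  inversion H as [k0 r0 b0 b' Hst Hob Hcl Hatt Hrb | k0 b0 b' Hst Hob Hcl]; subst.
  - destruct b' as [x' y'].
    destruct Hst as [Hne Hc]. apply ks_ne in Hne.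
    assert (x' = m \/ x' = m-1) as [->| ->] by (un; lia).
    + exists y'; split; [reflexivity|]. un; lia.
    + exfalso; apply Hatt. eexists; split; [reflexivity|]. un. reach_tac.
  - exfalso. un. lia.
Qed.

Lemma bm_up (m n k y r y' : nat) : 2 <= m -> 1 <= r <= 2 -> 3 <= y' -> k + 2 <= y' -> y' <= n ->
  (y' = S y \/ S y' = y) ->
  bmove m n (Pos (m,k) (Some (m-1,r)) (m,y)) (Pos (m,k) (Some (m-1,r)) (m,y')).
Proof.
  intros. apply bmove_plain.
  - split; [neqpair|]. un; lia.
  - un; lia.
  - un; lia.
  - notatt.
  - neqpair.
Qed.

Lemma endE (m n r : nat) : 4 <= m -> 5 <= n -> 1 <= r <= 2 ->
  white_mates_within m n 3 (Pos (m,n-3) (Some (m-1,r)) (m,n)).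
Proof.
  intros Hm Hn Hr.
  apply wmw_S. exists (Pos (m-1,n-2) (Some (m-1,r)) (m,n)). split.
  { apply wmove_king.
    - split; [neqpair|]. un; lia.
    - un; lia.
    - neqpair.
    - un; lia. }
  right. split.
  { exists (Pos (m-1,n-2) (Some (m-1,r)) (m-1,n)). apply bmove_plain.
    - split; [neqpair|]. un; lia.
    - un; lia.
    - un; lia.
    - notatt.
    - neqpair. }
  intros q Hq.
  inversion Hq as [k0 r0 b0 b' Hst Hob Hcl Hatt Hrb | k0 b0 b' Hst Hob Hcl]; subst;
    [| exfalso; un; lia].
  destruct b' as [x' y'].
  destruct Hst as [Hne Hc]. apply ks_ne in Hne.
  assert (x' = m-1 /\ y' = n) as [-> ->] by (un; lia).
  clear Hq Hatt Hrb Hne Hc Hob Hcl.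
  apply wmw_S. exists (Pos (m-1,n-2) (Some (m-2,r)) (m-1,n)). split.
  { apply wmove_rook.
    - reach_tac.
    - un; lia.
    - neqpair.
    - neqpair. }
  right. split.
  { exists (Pos (m-1,n-2) (Some (m-2,r)) (m,n)). apply bmove_plain.
    - split; [neqpair|]. un; lia.
    - un; lia.
    - un; lia.
    - notatt.
    - neqpair. }
  intros q Hq.
  inversion Hq as [k0 r0 b0 b' Hst Hob Hcl Hatt Hrb | k0 b0 b' Hst Hob Hcl]; subst;
    [| exfalso; un; lia].
  destruct b' as [x' y'].
  destruct Hst as [Hne Hc]. apply ks_ne in Hne.
  assert (y' = n) as -> by (un; lia).
  assert (x' = m \/ x' = m - 2) as [-> | ->] by (un; lia).
  2:{ exfalso; apply Hatt. eexists; split; [reflexivity|]. un. reach_tac. }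
  clear Hq Hatt Hrb Hne Hc Hob Hcl.
  apply wmw_S. exists (Pos (m-1,n-2) (Some (m-2,n)) (m,n)). split.
  { apply wmove_rook.
    - reach_tac.
    - un; lia.
    - neqpair.
    - neqpair. }
  left. split.
  { unfold black_in_check. eexists; split; [reflexivity|]. simpl. reach_tac. }
  intros q Hq.
  inversion Hq as [k0 r0 b0 b' Hst Hob Hcl Hatt Hrb | k0 b0 b' Hst Hob Hcl]; subst;
    [| exfalso; un; lia].
  destruct b' as [x' y'].
  destruct Hst as [Hne Hc]. apply ks_ne in Hne.
  assert (x' = m - 1 /\ y' = n) as [-> ->] by (un; lia).
  apply Hatt. eexists; split; [reflexivity|]. un. reach_tac.
Qed.

Lemma kstep_up (m n k y r : nat) : 2 <= m -> 1 <= r <= 2 -> k + 3 <= y -> y <= n -> 1 <= k ->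
  wmove m n (Pos (m,k) (Some (m-1,r)) (m,y)) (Pos (m,S k) (Some (m-1,r)) (m,y)).
Proof.
  intros. apply wmove_king.
  - split; [neqpair|]. un; lia.
  - un; lia.
  - neqpair.
  - un; lia.
Qed.

Lemma phaseA (m n : nat) : 4 <= m -> 5 <= n -> forall j k t r,
  k + j + 3 = n -> k + 3 + 2 * t <= n -> 1 <= k -> 1 <= r <= 2 ->
  white_mates_within m n (S (S (S j))) (Pos (m,k) (Some (m-1,r)) (m, k + 3 + 2 * t)).
Proof.
  intros Hm Hn j. induction j as [|j IH]; intros k t r Hj Hy Hk Hr.
  - assert (k = n - 3) as -> by lia.
    assert (n - 3 + 3 + 2 * t = n) as -> by lia.
    apply endE; lia.
  - apply wmw_S. exists (Pos (m,S k) (Some (m-1,r)) (m, k + 3 + 2 * t)). split.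
    { apply kstep_up; lia. }
    right. split.
    { destruct (Nat.lt_ge_cases (k + 3 + 2 * t) n).
      - eexists; apply (bm_up m n (S k) _ r (S (k + 3 + 2 * t))); lia.
      - eexists; apply (bm_up m n (S k) _ r (k + 2 + 2 * t)); lia. }
    intros q Hq. apply bm_col in Hq; try lia.
    destruct Hq as [y' [-> [Hy' [H1 H2]]]].
    destruct Hy' as [Hy' | Hy'].
    + replace y' with (S k + 3 + 2 * t) by lia. apply IH; lia.
    + replace y' with (S k + 3 + 2 * (t - 1)) by lia. apply IH; lia.
Qed.

Lemma phaseB (m n : nat) : 4 <= m -> 5 <= n -> forall j k t r,
  k + j + 3 = n -> k + 2 + 2 * t <= n -> 1 <= k -> 4 <= k + 2 + 2 * t -> 1 <= r <= 2 ->
  white_mates_within m n (S (S (S (S j)))) (Pos (m,k) (Some (m-1,r)) (m, k + 2 + 2 * t)).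
Proof.
  intros Hm Hn j. induction j as [|j IH]; intros k t r Hj Hy Hk Hy4 Hr.
  -
    assert (t = 0) as -> by lia.
    apply wmw_S. exists (Pos (m,k) (Some (m-1,3-r)) (m, k + 2 + 2 * 0)). split.
    { apply wmove_rook.
      - reach_tac.
      - un; lia.
      - neqpair.
      - neqpair. }
    right. split.
    { eexists; apply (bm_up m n k _ (3 - r) (S (k + 2 + 2 * 0))); lia. }
    intros q Hq. apply bm_col in Hq; try lia.
    destruct Hq as [y' [-> [Hy' [H1 H2]]]].
    replace y' with (k + 3 + 2 * 0) by lia. apply phaseA; lia.
  - destruct t as [|t].
    + apply wmw_S. exists (Pos (m,k) (Some (m-1,3-r)) (m, k + 2 + 2 * 0)). split.
      { apply wmove_rook.
        - reach_tac.
        - un; lia.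
        - neqpair.
        - neqpair. }
      right. split.
      { eexists; apply (bm_up m n k _ (3 - r) (S (k + 2 + 2 * 0))); lia. }
      intros q Hq. apply bm_col in Hq; try lia.
      destruct Hq as [y' [-> [Hy' [H1 H2]]]].
      replace y' with (k + 3 + 2 * 0) by lia. apply phaseA; lia.
    + apply wmw_S. exists (Pos (m,S k) (Some (m-1,r)) (m, k + 2 + 2 * S t)). split.
      { apply kstep_up; lia. }
      right. split.
      { destruct (Nat.lt_ge_cases (k + 2 + 2 * S t) n).
        - eexists; apply (bm_up m n (S k) _ r (S (k + 2 + 2 * S t))); lia.
        - eexists; apply (bm_up m n (S k) _ r (k + 1 + 2 * S t)); lia. }
      intros q Hq. apply bm_col in Hq; try lia.
      destruct Hq as [y' [-> [Hy' [H1 H2]]]].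
      destruct Hy' as [Hy' | Hy'].
      * replace y' with (S k + 2 + 2 * S t) by lia. apply IH; lia.
      * replace y' with (S k + 2 + 2 * t) by lia. apply IH; lia.
Qed.

Theorem lemma2 (m n : nat) :
  4 <= m -> 5 <= n -> Nat.Even n ->
  white_mates_within m n (n + 1) (Pos (m, 1) (Some (1, 1)) (m, n)).
Proof.
  intros Hm Hn [h Hh].
  replace (n + 1) with (S n) by lia.
  apply wmw_S. exists (Pos (m,1) (Some (m-1,1)) (m,n)). split.
  { apply wmove_rook.
    - reach_tac.
    - un; lia.
    - neqpair.
    - neqpair. }
  right. split.
  { eexists; apply (bm_up m n 1 n 1 (n - 1)); lia. }
  intros q Hq. apply bm_col in Hq; try lia.
  destruct Hq as [y' [-> [Hy' [H1 H2]]]].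
  replace y' with (1 + 2 + 2 * (h - 2)) by lia.
  assert (HE : S (S (S (S (n - 4)))) = n) by lia.
  pose proof (phaseB m n Hm Hn (n - 4) 1 (h - 2) 1) as P. rewrite HE in P.
  apply P; lia.
Qed.
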